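(* $$\sum_{n=0}^\infty \frac{\binom{2n}{n}}{(n+1)^3\, 2^{2n}} = 8 - 8\log 2 - \frac{\pi^2}{3} + 4(\log 2)^2.$$
   Context: $\binom{2n}{n}$ is the central binomial coefficient; $\log$ is the natural logarithm. *)

(* Defs.v *)
From Stdlib Require Import Reals.
From Coquelicot Require Import Coquelicot.

(* Main.v *)
Require Import Defs.
From Stdlib Require Import Reals Lra Lia Nsatz.
From Coquelicot Require Import Coquelicot.
Open Scope R_scope.

Definition b (n : nat) : R := Binomial.C (2 * n)%nat n / 2 ^ (2 * n)%nat.

Lemma b0 : b 0 = 1.
Proof. unfold b, Binomial.C. simpl. lra. Qed.

Lemma factS n : Factorial.fact (S n) = (S n * Factorial.fact n)%nat.
Proof. reflexivity. Qed.

Lemma bS n : b (S n) = b n * (2 * INR n + 1) / (2 * INR n + 2).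
Proof.
  unfold b, Binomial.C.
  replace (2 * S n)%nat with (S (S (2 * n))) by lia.
  replace (S (S (2 * n)) - S n)%nat with (S n) by lia.
  replace (2 * n - n)%nat with n by lia.
  rewrite !factS. rewrite !mult_INR. rewrite !S_INR. rewrite mult_INR.
  simpl (INR 2). replace (S (S (2*n))) with (2 + 2*n)%nat by lia. rewrite pow_add. simpl pow.
  assert (0 < INR (Factorial.fact n)) by (apply lt_0_INR, Factorial.lt_O_fact).
  assert (0 < INR (Factorial.fact (2*n))) by (apply lt_0_INR, Factorial.lt_O_fact).
  assert (0 < 2 ^ (2*n)) by (apply pow_lt; lra).
  assert (0 <= INR n) by apply pos_INR.
  field. repeat split; try lra. apply pow_nonzero; lra.
Qed.

Lemma b_pos n : 0 < b n.
Proof.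
  induction n. rewrite b0; lra. rewrite bS.
  assert (0 <= INR n) by apply pos_INR.
  apply Rdiv_lt_0_compat; [apply Rmult_lt_0_compat|]; lra.
Qed.

Lemma b_le1 n : b n <= 1.
Proof.
  induction n. rewrite b0; lra. rewrite bS.
  assert (0 <= INR n) by apply pos_INR. pose proof (b_pos n).
  apply Rle_trans with (b n); [|lra].
  apply Rmult_le_reg_r with (2 * INR n + 2). lra.
  field_simplify; nra.
Qed.

Lemma lin2 (f g : R -> R) a b A B (al be : R) :
  is_RInt f a b A -> is_RInt g a b B ->
  is_RInt (fun x => al * f x + be * g x) a b (al * A + be * B).
Proof.
  intros HA HB. apply (is_RInt_plus (fun x => al * f x) (fun x => be * g x)).
  apply (is_RInt_scal f a b al A HA). apply (is_RInt_scal g a b be B HB).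
Qed.

Lemma cont_cospow k x : continuous (fun x => cos x ^ k) x.
Proof. apply (ex_derive_continuous (K:=R_AbsRing) (V:=R_NormedModule)). auto_derive. auto. Qed.
Lemma cont_x2cospow k x : continuous (fun x => x^2 * cos x ^ k) x.
Proof. apply (ex_derive_continuous (K:=R_AbsRing) (V:=R_NormedModule)). auto_derive. auto. Qed.

Definition Ic k : R := RInt (fun x => cos x ^ k) 0 (PI/2).
Definition Jc k : R := RInt (fun x => x^2 * cos x ^ k) 0 (PI/2).

Lemma Ic_is k : is_RInt (fun x => cos x ^ k) 0 (PI/2) (Ic k).
Proof. apply (RInt_correct (V := R_CompleteNormedModule)), (ex_RInt_continuous (V := R_CompleteNormedModule)). intros; apply cont_cospow. Qed.
Lemma Jc_is k : is_RInt (fun x => x^2 * cos x ^ k) 0 (PI/2) (Jc k).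
Proof. apply (RInt_correct (V := R_CompleteNormedModule)), (ex_RInt_continuous (V := R_CompleteNormedModule)). intros; apply cont_x2cospow. Qed.

Lemma wallis k : INR (S (S k)) * Ic (S (S k)) - INR (S k) * Ic k = 0.
Proof.
  assert (H : is_RInt (fun x => INR (S (S k)) * cos x ^ (S (S k)) + (- INR (S k)) * cos x ^ k) 0 (PI/2)
    (minus ((fun x => sin x * cos x ^ (S k)) (PI/2)) ((fun x => sin x * cos x ^ (S k)) 0))).
  { apply (is_RInt_derive (V:=R_CompleteNormedModule) (fun x => sin x * cos x ^ (S k))).
    - intros x _. auto_derive. auto.
      change (match k with 0%nat => 1 | S _ => INR k + 1 end) with (INR (S k)).
      rewrite !S_INR. simpl pow.
      assert (Hs := sin2_cos2 x). unfold Rsqr in Hs.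
      generalize dependent (sin x). generalize (cos x). generalize (cos x ^ k). intros. nsatz.
    - intros x _. apply (ex_derive_continuous (K:=R_AbsRing) (V:=R_NormedModule)). auto_derive. auto. }
  assert (H2 := lin2 _ _ _ _ _ _ (INR (S (S k))) (- INR (S k)) (Ic_is (S (S k))) (Ic_is k)).
  cbv beta in H, H2.
  apply (is_RInt_unique (V:=R_CompleteNormedModule)) in H. apply (is_RInt_unique (V:=R_CompleteNormedModule)) in H2. rewrite H2 in H.
  rewrite cos_PI2, sin_0, pow_i in H by lia. unfold minus, plus, opp in H; simpl in H. change (match k with 0%nat => 1 | S _ => INR k + 1 end) with (INR (S k)) in H. rewrite !S_INR in *. lra.
Qed.

Lemma matsuoka k m : INR k + 2 = 2 * m ->
  Ic (S (S k)) + 2 * m^2 * Jc (S (S k)) - m * INR (S k) * Jc k = 0.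
Proof.
  intros Hm.
  assert (H : is_RInt (fun x => 1 * cos x ^ (S (S k)) + 1 * (2 * m^2 * (x^2 * cos x ^ (S (S k))) + (- (m * INR (S k))) * (x^2 * cos x ^ k))) 0 (PI/2)
    (minus ((fun x => x * cos x ^ (S (S k)) + m * x^2 * sin x * cos x ^ (S k)) (PI/2))
           ((fun x => x * cos x ^ (S (S k)) + m * x^2 * sin x * cos x ^ (S k)) 0))).
  { apply (is_RInt_derive (V:=R_CompleteNormedModule) (fun x => x * cos x ^ (S (S k)) + m * x^2 * sin x * cos x ^ (S k))).
    - intros x _. auto_derive. auto.
      change (match k with 0%nat => 1 | S _ => INR k + 1 end) with (INR (S k)).
      rewrite !S_INR. simpl pow.
      assert (Hs := sin2_cos2 x). unfold Rsqr in Hs.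
      generalize dependent (sin x). generalize (cos x). generalize (cos x ^ k). intros. nsatz.
    - intros x _. apply (ex_derive_continuous (K:=R_AbsRing) (V:=R_NormedModule)). auto_derive. auto. }
  assert (H2 := lin2 _ _ _ _ _ _ 1 1 (Ic_is (S (S k)))
     (lin2 _ _ _ _ _ _ (2 * m^2) (- (m * INR (S k))) (Jc_is (S (S k))) (Jc_is k))).
  cbv beta in H, H2.
  apply (is_RInt_unique (V:=R_CompleteNormedModule)) in H. apply (is_RInt_unique (V:=R_CompleteNormedModule)) in H2. rewrite H2 in H.
  rewrite cos_PI2, sin_0 in H. rewrite !(pow_i (S _)) in H by lia. unfold minus, plus, opp in H; simpl in H. change (match k with 0%nat => 1 | S _ => INR k + 1 end) with (INR (S k)) in H. rewrite !S_INR in *. lra.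
Qed.

Lemma Ic0 : Ic 0 = PI/2.
Proof.
  unfold Ic. simpl pow. rewrite RInt_const. unfold scal; simpl. unfold mult; simpl. lra.
Qed.

Lemma Jc0 : Jc 0 = (PI/2)^3/3.
Proof.
  assert (H : is_RInt (fun x => x^2 * cos x ^ 0) 0 (PI/2) (minus ((fun x => x^3/3) (PI/2)) ((fun x => x^3/3) 0))).
  { apply (is_RInt_derive (V:=R_CompleteNormedModule) (fun x => x^3/3)).
    - intros x _. auto_derive. auto. simpl. field.
    - intros x _. apply cont_x2cospow. }
  apply (is_RInt_unique (V:=R_CompleteNormedModule)) in H. unfold Jc. rewrite H.
  unfold minus, plus, opp; simpl. field.
Qed.

Lemma Ic_pos n : 0 < Ic (2 * n).
Proof.
  induction n. simpl. rewrite Ic0. pose proof PI_RGT_0. lra.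
  replace (2 * S n)%nat with (S (S (2 * n))) by lia.
  pose proof (wallis (2*n)). rewrite !S_INR in H.
  assert (0 <= INR (2*n)) by apply pos_INR.
  assert (Ic (S (S (2 * n))) = (INR (2*n) + 1) * Ic (2*n) / (INR (2*n) + 1 + 1)) by (field_simplify_eq; [lra|lra]).
  rewrite H1. apply Rdiv_lt_0_compat; [apply Rmult_lt_0_compat|]; lra.
Qed.

Lemma xcos_le_sin x : 0 <= x <= PI/2 -> x * cos x <= sin x.
Proof.
  intros Hx. pose proof PI_RGT_0.
  destruct (MVT_gen (fun t => sin t - t * cos t) 0 x (fun t => t * sin t)) as [c [Hc E]].
  - intros y _. auto_derive. auto. ring.
  - intros y _. apply continuity_pt_filterlim.
    apply (ex_derive_continuous (K:=R_AbsRing) (V:=R_NormedModule) (fun t => sin t - t * cos t)). auto_derive. auto.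
  - rewrite Rmin_left in Hc by lra. rewrite Rmax_right in Hc by lra.
    rewrite sin_0, cos_0 in E.
    assert (0 <= sin c) by (apply sin_ge_0; lra).
    assert (0 <= c * sin c * (x - 0)) by (apply Rmult_le_pos; [apply Rmult_le_pos|]; lra).
    lra.
Qed.

Lemma ex_cospow k : ex_RInt (fun x => cos x ^ k) 0 (PI/2).
Proof. apply (ex_RInt_continuous (V := R_CompleteNormedModule)). intros; apply cont_cospow. Qed.
Lemma ex_x2cospow k : ex_RInt (fun x => x^2 * cos x ^ k) 0 (PI/2).
Proof. apply (ex_RInt_continuous (V := R_CompleteNormedModule)). intros; apply cont_x2cospow. Qed.

Lemma Jc_ge0 k : 0 <= Jc k.
Proof.
  pose proof PI_RGT_0.
  apply RInt_ge_0. lra. apply ex_x2cospow.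
  intros x Hx. apply Rmult_le_pos. nra. apply pow_le. apply Rlt_le, cos_gt_0; lra.
Qed.

Lemma Jc_le k : Jc (S (S k)) <= Ic k - Ic (S (S k)).
Proof.
  pose proof PI_RGT_0.
  assert (E := lin2 _ _ _ _ _ _ 1 (-1) (Ic_is k) (Ic_is (S (S k)))).
  cbv beta in E. apply (is_RInt_unique (V:=R_CompleteNormedModule)) in E.
  replace (Ic k - Ic (S (S k))) with (1 * Ic k + -1 * Ic (S (S k))) by ring.
  rewrite <- E. apply RInt_le. lra. apply ex_x2cospow.
  apply (ex_RInt_continuous (V := R_CompleteNormedModule)). intros.
  apply (ex_derive_continuous (K:=R_AbsRing) (V:=R_NormedModule)). auto_derive. auto.
  intros x Hx. assert (Hc : 0 < cos x) by (apply cos_gt_0; lra).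
  assert (Hp : 0 <= cos x ^ k) by (apply pow_le; lra).
  assert (Hxs := xcos_le_sin x (conj (Rlt_le _ _ (proj1 Hx)) (Rlt_le _ _ (proj2 Hx)))).
  assert (Hs := sin2_cos2 x). unfold Rsqr in Hs.
  assert (0 <= x * cos x) by (apply Rmult_le_pos; lra).
  assert (x^2 * (cos x * cos x) <= sin x * sin x) by nra.
  simpl pow. nra.
Qed.

Definition rr n := Jc (2 * n) / Ic (2 * n).

Lemma rr_step n : / (INR n + 1) ^ 2 = 2 * (rr n - rr (S n)).
Proof.
  unfold rr. replace (2 * S n)%nat with (S (S (2 * n))) by lia.
  pose proof (Ic_pos n) as HI. pose proof (Ic_pos (S n)) as HI'.
  replace (2 * S n)%nat with (S (S (2 * n))) in HI' by lia.
  pose proof (wallis (2 * n)) as W.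
  pose proof (matsuoka (2 * n) (INR n + 1)) as M.
  rewrite !S_INR in W. rewrite !S_INR in M.
  assert (E2 : INR (2 * n) = 2 * INR n) by (rewrite mult_INR; reflexivity).
  rewrite E2 in W, M.
  specialize (M ltac:(ring)).
  assert (0 <= INR n) by apply pos_INR.
  revert H HI HI' W M. generalize (Ic (2*n)) (Ic (S (S (2*n)))) (Jc (2*n)) (Jc (S (S (2*n)))) (INR n).
  intros I I' J J' x H0 HI HI' W M.
  field_simplify_eq; [| lra].
  apply Rminus_diag_uniq.
  transitivity (I * (I' + 2 * (x + 1) ^ 2 * J' - (x + 1) * (2 * x + 1) * J) - (x+1) * J * ((2 * x + 1 + 1) * I' - (2 * x + 1) * I)).
  ring. rewrite M, W. ring.
Qed.

Lemma rr0 : rr 0 = PI^2/12.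
Proof. unfold rr. simpl (2*0)%nat. rewrite Jc0, Ic0. pose proof PI_RGT_0. field. lra. Qed.

Lemma sum_rr N : sum_n (fun k => / (INR k + 1)^2) N = 2 * (rr 0 - rr (S N)).
Proof.
  induction N.
  - rewrite sum_O. rewrite rr_step. reflexivity.
  - rewrite sum_Sn, IHN. rewrite (rr_step (S N)). unfold plus; simpl. ring.
Qed.

Lemma rr_bound N : 0 <= rr (S N) <= / (2 * INR N + 1).
Proof.
  unfold rr. replace (2 * S N)%nat with (S (S (2 * N))) by lia.
  pose proof (Ic_pos N) as HI. pose proof (Ic_pos (S N)) as HI'.
  replace (2 * S N)%nat with (S (S (2 * N))) in HI' by lia.
  pose proof (wallis (2 * N)) as W. rewrite !S_INR in W.
  assert (E2 : INR (2 * N) = 2 * INR N) by (rewrite mult_INR; reflexivity).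
  rewrite E2 in W.
  pose proof (Jc_le (2 * N)) as JL. pose proof (Jc_ge0 (S (S (2 * N)))) as JG.
  assert (0 <= INR N) by apply pos_INR.
  revert H HI HI' W JL JG. generalize (Ic (2*N)) (Ic (S (S (2*N)))) (Jc (S (S (2*N)))) (INR N).
  intros I I' J' x H0 HI HI' W JL JG. split.
  - apply Rdiv_le_0_compat; lra.
  - apply Rle_trans with ((I - I') / I'). apply Rmult_le_compat_r. left; apply Rinv_0_lt_compat; lra. lra.
    right. assert (I = (2*x+2) * I' / (2*x+1)) by (field_simplify_eq; lra).
    rewrite H. field. lra.
Qed.

Lemma zeta2 : is_series (fun k => / (INR k + 1)^2) (PI^2/6).
Proof.
  assert (L : is_lim_seq (sum_n (fun k => / (INR k + 1)^2)) (PI^2/6)).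
  { apply is_lim_seq_le_le with (u := fun N => PI^2/6 - 2 * / (2 * INR N + 1)) (w := fun _ => PI^2/6).
    - intros N. rewrite sum_rr, rr0. pose proof (rr_bound N). lra.
    - replace (Finite (PI^2/6)) with (Finite (PI^2/6 - 2 * 0)) by (f_equal; ring).
      apply is_lim_seq_minus'. apply is_lim_seq_const.
      apply (is_lim_seq_scal_l _ 2 0).
      replace (Finite 0) with (Rbar_inv p_infty) by reflexivity.
      apply is_lim_seq_inv; [|discriminate].
      apply is_lim_seq_le_p_loc with INR. exists 0%nat. intros n _. pose proof (pos_INR n). lra.
      apply is_lim_seq_INR.
    - apply is_lim_seq_const. }
  exact L.
Qed.

Lemma radius1 (a : nat -> R) : (forall n, Rabs (a n) <= 1) ->
  forall x, Rabs x < 1 -> Rbar_lt (Rabs x) (CV_radius a).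
Proof.
  intros Ha x Hx. destruct (CV_radius_bounded a) as [Hub _].
  assert (H1 : Rbar_le 1 (CV_radius a)).
  { apply Hub. exists 1. intros n. rewrite pow1, Rmult_1_r. apply Ha. }
  destruct (CV_radius a) as [r| |]; simpl in *; lra || trivial.
Qed.

Lemma deriv_xP (c d : nat -> R) : (forall n, Rabs (c n) <= 1) ->
  (forall n, INR (S n) * c n = d n) -> forall x, Rabs x < 1 ->
  is_derive (fun y => y * PSeries c y) x (PSeries d x).
Proof.
  intros Hc Hd x Hx.
  apply is_derive_ext with (f := PSeries (PS_incr_1 c)).
  { intros t. apply PSeries_incr_1. }
  rewrite <- (PSeries_ext (PS_derive (PS_incr_1 c))).
  2: { intros n. unfold PS_derive. simpl. apply Hd. }
  apply is_derive_PSeries. rewrite CV_radius_incr_1. apply radius1; auto.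
Qed.

Lemma ex_derive_P (c : nat -> R) : (forall n, Rabs (c n) <= 1) ->
  forall x, Rabs x < 1 -> ex_derive (PSeries c) x.
Proof.
  intros Hc x Hx. eexists. apply is_derive_PSeries. apply radius1; auto.
Qed.

Lemma const_open (f : R -> R) a b :
  (forall y, a < y < b -> is_derive f y 0) ->
  forall x z, a < x < b -> a < z < b -> f x = f z.
Proof.
  intros Hd x z Hx Hz.
  destruct (MVT_gen f x z (fun _ => 0)) as [c [Hc E]].
  - intros y Hy. apply Hd. split.
    + apply Rlt_le_trans with (Rmin x z). apply Rmin_glb_lt; lra. lra.
    + apply Rlt_le_trans with (Rmax x z). lra. apply Rmax_lub; lra.
  - intros y Hy. apply continuity_pt_filterlim.
    apply (ex_derive_continuous (K:=R_AbsRing) (V:=R_NormedModule) f).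
    eexists. apply Hd. split.
    + apply Rlt_le_trans with (Rmin x z). apply Rmin_glb_lt; lra. lra.
    + apply Rle_lt_trans with (Rmax x z). lra. apply Rmax_lub_lt; lra.
  - lra.
Qed.

Lemma const0 (f : R -> R) :
  (forall y, -1 < y < 1 -> ex_derive f y) ->
  (forall y, 0 < y < 1 -> is_derive f y 0) ->
  forall x, 0 <= x < 1 -> f x = f 0.
Proof.
  intros He Hd x Hx.
  destruct (MVT_gen f 0 x (fun _ => 0)) as [c [Hc E]].
  - intros y Hy. rewrite Rmin_left in Hy by lra. rewrite Rmax_right in Hy by lra. apply Hd. lra.
  - intros y Hy. rewrite Rmin_left in Hy by lra. rewrite Rmax_right in Hy by lra.
    apply continuity_pt_filterlim.
    apply (ex_derive_continuous (K:=R_AbsRing) (V:=R_NormedModule) f). apply He. lra.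
  - lra.
Qed.

Lemma geom_P w : Rabs w < 1 -> PSeries (fun _ => 1) w = / (1 - w).
Proof.
  intros Hw. apply is_pseries_unique. unfold is_pseries.
  apply is_series_ext with (a := fun n => w ^ n).
  - intros n. unfold scal; simpl. unfold mult; simpl. rewrite Rmult_1_r. symmetry. apply pow_n_pow.
  - apply is_series_geom; auto.
Qed.

Lemma b_abs n : Rabs (b n) <= 1.
Proof. pose proof (b_pos n). pose proof (b_le1 n). rewrite Rabs_pos_eq; lra. Qed.

Lemma key_P0 x : Rabs x < 1 -> 2 * (1 - x) * PSeries (PS_derive b) x = PSeries b x.
Proof.
  intros Hx.
  set (e := fun n => INR n * b n).
  assert (R1 : Rbar_lt (Rabs x) (CV_radius b)) by (apply radius1; auto using b_abs).
  assert (Hi : forall n, PS_incr_1 (PS_derive b) n = e n).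
  { intros [|n]; simpl. unfold e. simpl. unfold zero; simpl. ring. unfold e, PS_derive. reflexivity. }
  assert (Hd : forall n, PS_derive b n = PS_plus e (PS_scal (/2) b) n).
  { intros n. unfold PS_derive, PS_plus, PS_scal, e. rewrite bS. rewrite S_INR.
    unfold plus, scal; simpl. unfold mult; simpl.
    assert (0 <= INR n) by apply pos_INR. field. lra. }
  assert (Ee : ex_pseries e x).
  { apply CV_radius_inside. rewrite <- (CV_radius_ext _ _ Hi).
    rewrite CV_radius_incr_1, CV_radius_derive. auto. }
  assert (Eb : ex_pseries (PS_scal (/2) b) x).
  { apply CV_radius_inside. rewrite CV_radius_scal. auto. apply Rinv_neq_0_compat; lra. }
  assert (E1 : x * PSeries (PS_derive b) x = PSeries e x).
  { rewrite <- PSeries_incr_1. apply PSeries_ext. auto. }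
  assert (E2 : PSeries (PS_derive b) x = PSeries e x + / 2 * PSeries b x).
  { rewrite (PSeries_ext _ _ x Hd). rewrite PSeries_plus by auto. rewrite PSeries_scal. reflexivity. }
  replace (2 * (1 - x) * PSeries (PS_derive b) x) with (2 * PSeries (PS_derive b) x - 2 * (x * PSeries (PS_derive b) x)) by ring.
  rewrite E1, E2. field.
Qed.

Lemma DP (c : nat -> R) y : (forall n, Rabs (c n) <= 1) -> Rabs y < 1 ->
  Derive (fun x => PSeries c x) y = PSeries (PS_derive c) y.
Proof.
  intros Hc Hy. apply is_derive_unique. apply is_derive_PSeries. apply radius1; auto.
Qed.

Lemma P0_closed x : 0 <= x < 1 -> PSeries b x * sqrt (1 - x) = 1.
Proof.
  intros Hx.
  replace 1 with (PSeries b 0 * sqrt (1 - 0)) at 2.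
  2: { rewrite PSeries_0, b0, Rminus_0_r, sqrt_1. ring. }
  apply (const0 (fun x => PSeries b x * sqrt (1 - x))); auto.
  - intros y Hy. auto_derive. split. apply ex_derive_P. apply b_abs. apply Rabs_def1; lra.
    split; [lra| auto].
  - intros y Hy. auto_derive. split. apply ex_derive_P. apply b_abs. apply Rabs_def1; lra.
    split; [lra| auto].
    rewrite DP; [| apply b_abs | apply Rabs_def1; lra].
    replace (1 + - y) with (1 - y) by ring.
    assert (K := key_P0 y ltac:(apply Rabs_def1; lra)).
    assert (Hu : 0 < sqrt (1 - y)) by (apply sqrt_lt_R0; lra).
    assert (Hu2 : sqrt (1 - y) * sqrt (1 - y) = 1 - y) by (apply sqrt_sqrt; lra).
    rewrite <- K. revert Hu Hu2. generalize (sqrt (1 - y)). generalize (PSeries (PS_derive b) y).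
    intros D u Hu Hu2. rewrite <- Hu2. field. lra.
Qed.

Definition c1 n := b n / (INR n + 1).
Definition c2 n := b n / (INR n + 1)^2.
Definition c3 n := b n / (INR n + 1)^3.
Definition lg n := / (INR n + 1).
Definition l2 n := / (INR n + 1)^2.

Lemma abs_div_le (p q : R) : 0 < p <= 1 -> 1 <= q -> Rabs (p / q) <= 1.
Proof.
  intros Hp Hq. rewrite Rabs_pos_eq.
  apply Rmult_le_reg_r with q. lra. unfold Rdiv. rewrite Rmult_assoc, Rinv_l by lra. lra.
  apply Rdiv_le_0_compat; lra.
Qed.

Lemma INR1 n : 1 <= INR n + 1.
Proof. pose proof (pos_INR n). lra. Qed.

Lemma c1_abs n : Rabs (c1 n) <= 1.
Proof. apply abs_div_le. split; [apply b_pos|apply b_le1]. apply INR1. Qed.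
Lemma c2_abs n : Rabs (c2 n) <= 1.
Proof. apply abs_div_le. split; [apply b_pos|apply b_le1]. pose proof (INR1 n). nra. Qed.
Lemma c3_abs n : Rabs (c3 n) <= 1.
Proof. apply abs_div_le. split; [apply b_pos|apply b_le1]. pose proof (INR1 n).
  replace ((INR n + 1)^3) with ((INR n + 1) * ((INR n+1) * (INR n + 1))) by ring.
  assert (1 <= (INR n+1) * (INR n + 1)) by nra. nra. Qed.
Lemma lg_abs n : Rabs (lg n) <= 1.
Proof. unfold lg. rewrite <- (Rmult_1_l (/ _)). apply abs_div_le. lra. apply INR1. Qed.
Lemma l2_abs n : Rabs (l2 n) <= 1.
Proof. unfold l2. rewrite <- (Rmult_1_l (/ _)). apply abs_div_le. lra. pose proof (INR1 n). nra. Qed.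
Lemma one_abs (n : nat) : Rabs 1 <= 1.
Proof. rewrite Rabs_R1. lra. Qed.

Lemma rel_c1 n : INR (S n) * c1 n = b n.
Proof. unfold c1. rewrite S_INR. pose proof (INR1 n). field. lra. Qed.
Lemma rel_c2 n : INR (S n) * c2 n = c1 n.
Proof. unfold c1, c2. rewrite S_INR. pose proof (INR1 n). field. lra. Qed.
Lemma rel_c3 n : INR (S n) * c3 n = c2 n.
Proof. unfold c3, c2. rewrite S_INR. pose proof (INR1 n). field. lra. Qed.
Lemma rel_lg n : INR (S n) * lg n = 1.
Proof. unfold lg. rewrite S_INR. pose proof (INR1 n). field. lra. Qed.
Lemma rel_l2 n : INR (S n) * l2 n = lg n.
Proof. unfold lg, l2. rewrite S_INR. pose proof (INR1 n). field. lra. Qed.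

Lemma P1_closed x : 0 <= x < 1 -> x * PSeries c1 x = 2 - 2 * sqrt (1 - x).
Proof.
  intros Hx.
  assert (H := const0 (fun x => x * PSeries c1 x - (2 - 2 * sqrt (1 - x)))).
  simpl in H. rewrite Rmult_0_l, Rminus_0_r, sqrt_1 in H.
  enough (x * PSeries c1 x - (2 - 2 * sqrt (1 - x)) = 0) by lra.
  rewrite H; [ring| | |lra].
  - intros y Hy. auto_derive. repeat split; try lra. apply ex_derive_P. apply c1_abs. apply Rabs_def1; lra.
  - intros y Hy.
    replace 0 with (minus (PSeries b y) (/ sqrt (1 - y))).
    apply (is_derive_minus (fun x => x * PSeries c1 x) (fun x => 2 - 2 * sqrt (1 - x))).
    apply deriv_xP. apply c1_abs. apply rel_c1. apply Rabs_def1; lra.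
    auto_derive. lra. 
    assert (Hu : 0 < sqrt (1 - y)) by (apply sqrt_lt_R0; lra).
    replace (1 + - y) with (1 - y) by ring. field. lra.
    pose proof (P0_closed y ltac:(lra)).
    assert (Hu : 0 < sqrt (1 - y)) by (apply sqrt_lt_R0; lra).
    unfold minus, plus, opp; simpl. assert (E : PSeries b y + - / sqrt (1 - y) = 0). { replace (PSeries b y) with (/ sqrt (1-y)). ring. apply Rmult_eq_reg_r with (sqrt (1-y)); [rewrite H0; field; lra | lra]. } exact E.
Qed.

Lemma P2_closed x : 0 <= x < 1 ->
  x * PSeries c2 x = 4 * (1 - sqrt (1 - x) - ln 2 + ln (1 + sqrt (1 - x))).
Proof.
  intros Hx.
  assert (H := const0 (fun x => x * PSeries c2 x - 4 * (1 - sqrt (1 - x) - ln 2 + ln (1 + sqrt (1 - x))))).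
  simpl in H. rewrite Rmult_0_l, Rminus_0_r, sqrt_1 in H.
  enough (x * PSeries c2 x - 4 * (1 - sqrt (1 - x) - ln 2 + ln (1 + sqrt (1 - x))) = 0) by lra.
  rewrite H; [replace (1 + 1) with 2 by ring; ring| | |lra].
  - intros y Hy. auto_derive. repeat split; try lra. apply ex_derive_P. apply c2_abs. apply Rabs_def1; lra.
    pose proof (sqrt_pos (1 + - y)). lra.
  - intros y Hy.
    assert (Hu : 0 < sqrt (1 - y)) by (apply sqrt_lt_R0; lra).
    assert (Hu2 : sqrt (1 - y) * sqrt (1 - y) = 1 - y) by (apply sqrt_sqrt; lra).
    replace 0 with (minus (PSeries c1 y) (2 / (1 + sqrt (1 - y)))).
    apply (is_derive_minus (fun x => x * PSeries c2 x) (fun x => 4 * (1 - sqrt (1 - x) - ln 2 + ln (1 + sqrt (1 - x))))).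
    apply deriv_xP. apply c2_abs. apply rel_c2. apply Rabs_def1; lra.
    auto_derive. replace (1 + - y) with (1 - y) by ring. repeat split; lra.
    replace (1 + - y) with (1 - y) by ring.
    revert Hu Hu2. generalize (sqrt (1 - y)). intros u Hu Hu2. field. lra.
    pose proof (P1_closed y ltac:(lra)) as P1.
    unfold minus, plus, opp; simpl.
    assert (E : PSeries c1 y + - (2 / (1 + sqrt (1 - y))) = 0).
    { apply Rmult_eq_reg_l with y; [|lra]. rewrite Rmult_plus_distr_l, P1.
      revert Hu Hu2. generalize (sqrt (1 - y)). intros u Hu Hu2. replace y with (1 - u*u) by lra. field. lra. }
    exact E.
Qed.

Lemma ln_series w : 0 <= w < 1 -> w * PSeries lg w = - ln (1 - w).
Proof.
  intros Hw.
  assert (H := const0 (fun x => x * PSeries lg x + ln (1 - x))).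
  simpl in H. rewrite Rmult_0_l, Rminus_0_r, ln_1 in H.
  enough (w * PSeries lg w + ln (1 - w) = 0) by lra.
  rewrite H; [ring| | |lra].
  - intros y Hy. auto_derive. repeat split; try lra. apply ex_derive_P. apply lg_abs. apply Rabs_def1; lra.
  - intros y Hy.
    replace 0 with (plus (PSeries (fun _ => 1) y) (- / (1 - y))).
    apply (is_derive_plus (fun x => x * PSeries lg x) (fun x => ln (1 - x))).
    apply deriv_xP. apply lg_abs. apply rel_lg. apply Rabs_def1; lra.
    auto_derive. lra. field. lra.
    rewrite geom_P by (apply Rabs_def1; lra). unfold plus; simpl.
    assert (E : / (1 - y) + - / (1 - y) = 0) by ring. exact E.
Qed.

Definition Li2 w := w * PSeries l2 w.

Lemma Li2_derive w : Rabs w < 1 -> is_derive Li2 w (PSeries lg w).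
Proof. intros Hw. apply deriv_xP; auto. apply l2_abs. apply rel_l2. Qed.

Lemma Li2_derive' w : 0 < w < 1 -> is_derive Li2 w (- ln (1 - w) / w).
Proof.
  intros Hw. replace (- ln (1 - w) / w) with (PSeries lg w).
  apply Li2_derive. apply Rabs_def1; lra.
  rewrite <- ln_series by lra. field. lra.
Qed.

Definition F u := 8 * (1 - u) - 8 * ln 2 + 8 * ln (1 + u) - 4 * Li2 ((1 - u) / 2) + 2 * (ln ((1 + u) / 2))^2.

Lemma F_derive y : 0 < y < 1 -> is_derive (fun x => F (sqrt (1 - x))) y
   (4 * (1 - sqrt (1 - y) - ln 2 + ln (1 + sqrt (1 - y))) / y).
Proof.
  intros Hy. unfold F.
  assert (Hu : 0 < sqrt (1 - y)) by (apply sqrt_lt_R0; lra).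
  assert (Hu2 : sqrt (1 - y) * sqrt (1 - y) = 1 - y) by (apply sqrt_sqrt; lra).
  assert (Hu1 : sqrt (1 - y) < 1).
  { rewrite <- sqrt_1 at 2. apply sqrt_lt_1; lra. }
  assert (DL : forall w, 0 < w < 1 -> Derive (fun x => Li2 x) w = - ln (1 - w) / w).
  { intros w Hw. apply is_derive_unique, Li2_derive'; auto. }
  auto_derive.
  - replace (1 + - y) with (1 - y) by ring. repeat split; try lra.
    eexists. apply Li2_derive. apply Rabs_def1; lra.
  - replace (1 + - y) with (1 - y) by ring.
    rewrite DL by lra.
    replace (1 - (1 + - sqrt (1 - y)) * / 2) with ((1 + sqrt (1 - y)) * / 2) by field.
    replace ((1 + sqrt (1 - y)) * / 2) with ((1 + sqrt (1 - y)) / 2) by field.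
    rewrite (ln_div (1 + sqrt (1 - y)) 2) by lra.
    revert Hu Hu2 Hu1. generalize (sqrt (1 - y)). intros u Hu Hu2 Hu1.
    replace y with (1 - u * u) by lra.
    field. repeat split; lra.
Qed.

Lemma F1 : F 1 = 0.
Proof.
  unfold F, Li2. replace ((1 - 1) / 2) with 0 by field. replace (1 + 1) with 2 by ring.
  replace (2 / 2) with 1 by field. rewrite ln_1. ring.
Qed.

Lemma P3_closed x : 0 <= x < 1 -> x * PSeries c3 x = F (sqrt (1 - x)).
Proof.
  intros Hx.
  assert (H := const0 (fun x => x * PSeries c3 x - F (sqrt (1 - x)))).
  simpl in H. rewrite Rmult_0_l, Rminus_0_r, sqrt_1, F1 in H.
  enough (x * PSeries c3 x - F (sqrt (1 - x)) = 0) by lra.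
  rewrite H; [ring| | |lra].
  - intros y Hy. unfold F. 
    assert (Hu : 0 <= sqrt (1 - y)) by apply sqrt_pos.
    assert (Hu2 : sqrt (1 - y) * sqrt (1 - y) = 1 - y) by (apply sqrt_sqrt; lra).
    assert (sqrt (1 - y) < 3) by nra.
    auto_derive. replace (1 + - y) with (1 - y) by ring. repeat split; try lra.
    apply ex_derive_P. apply c3_abs. apply Rabs_def1; lra.
    eexists. apply Li2_derive. apply Rabs_def1; lra.
  - intros y Hy.
    replace 0 with (minus (PSeries c2 y) (4 * (1 - sqrt (1 - y) - ln 2 + ln (1 + sqrt (1 - y))) / y)).
    apply (is_derive_minus (fun x => x * PSeries c3 x) (fun x => F (sqrt (1 - x)))).
    apply deriv_xP. apply c3_abs. apply rel_c3. apply Rabs_def1; lra.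
    apply F_derive; auto.
    pose proof (P2_closed y ltac:(lra)) as P2.
    unfold minus, plus, opp; simpl.
    assert (E : PSeries c2 y + - (4 * (1 - sqrt (1 - y) - ln 2 + ln (1 + sqrt (1 - y))) / y) = 0).
    { rewrite <- P2. field. lra. }
    exact E.
Qed.

Lemma sumR_S (a : nat -> R) N : sum_n a (S N) = sum_n a N + a (S N).
Proof. rewrite sum_Sn. reflexivity. Qed.

Lemma sum_mono (a : nat -> R) : (forall n, 0 <= a n) -> forall N n, sum_n a N <= sum_n a (n + N).
Proof.
  intros Ha N n. induction n. simpl. lra.
  replace (S n + N)%nat with (S (n + N)) by lia. rewrite sumR_S. pose proof (Ha (S (n + N))). lra.
Qed.

Lemma sum_le_Series (a : nat -> R) N : (forall n, 0 <= a n) -> ex_series a -> sum_n a N <= Series a.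
Proof.
  intros Ha He.
  assert (L : is_lim_seq (fun n => sum_n a (n + N)) (Series a)).
  { apply (is_lim_seq_incr_n (sum_n a) N). apply Series_correct in He. exact He. }
  assert (H := is_lim_seq_le (fun _ => sum_n a N) _ _ _ (sum_mono a Ha N) (is_lim_seq_const _) L).
  exact H.
Qed.

Lemma Series_ge0 (a : nat -> R) : (forall n, 0 <= a n) -> ex_series a -> 0 <= Series a.
Proof.
  intros Ha He. apply Rle_trans with (sum_n a 0). rewrite sum_O. apply Ha. apply sum_le_Series; auto.
Qed.

Lemma series_le_bound (a : nat -> R) l M : is_series a l -> (forall N, sum_n a N <= M) -> l <= M.
Proof.
  intros Hs HN.
  assert (H := is_lim_seq_le _ (fun _ => M) l M HN Hs (is_lim_seq_const _)). exact H.
Qed.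

Lemma pow_le1 x n : 0 <= x <= 1 -> x ^ n <= 1.
Proof.
  intros Hx. induction n. simpl; lra. simpl. assert (0 <= x ^ n) by (apply pow_le; lra). nra.
Qed.

Lemma pow_partial (a : nat -> R) x : (forall n, 0 <= a n) -> 0 <= x <= 1 ->
  forall N, x ^ N * sum_n a N <= sum_n (fun k => a k * x ^ k) N.
Proof.
  intros Ha Hx N. induction N.
  - rewrite !sum_O. simpl. lra.
  - rewrite !sumR_S. simpl pow.
    assert (0 <= x ^ N) by (apply pow_le; lra).
    assert (0 <= sum_n a N).
    { clear IHN. induction N. rewrite sum_O; apply Ha. rewrite sumR_S. pose proof (Ha (S N)). 
      assert (0 <= x ^ N) by (apply pow_le; lra). lra. }
    assert (x * (x ^ N * sum_n a N) <= x ^ N * sum_n a N).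
    { assert (0 <= x ^ N * sum_n a N) by (apply Rmult_le_pos; lra). nra. }
    nra.
Qed.

Lemma PSeries_le_Series (a : nat -> R) x : (forall n, 0 <= a n) -> ex_series a -> 0 <= x <= 1 ->
  0 <= PSeries a x <= Series a.
Proof.
  intros Ha He Hx. unfold PSeries.
  assert (Hb : forall n, 0 <= a n * x ^ n <= a n).
  { intros n. pose proof (Ha n). assert (0 <= x ^ n <= 1) by (split; [apply pow_le; lra| apply pow_le1; lra]).
    split; nra. }
  split.
  - apply Series_ge0. intros n; apply Hb. apply (ex_series_le (K:=R_AbsRing) (V:=R_CompleteNormedModule)) with a; auto.
    intros n. unfold norm; simpl. rewrite Rabs_pos_eq; apply Hb.
  - apply Series_le; auto.
Qed.

Lemma partial_le_PSeries (a : nat -> R) x N : (forall n, 0 <= a n) -> ex_series a -> 0 <= x <= 1 ->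
  sum_n (fun k => a k * x ^ k) N <= PSeries a x.
Proof.
  intros Ha He Hx. unfold PSeries. apply sum_le_Series.
  intros n. apply Rmult_le_pos; [apply Ha| apply pow_le; lra].
  apply (ex_series_le (K:=R_AbsRing) (V:=R_CompleteNormedModule)) with a; auto.
  intros n. unfold norm; simpl. pose proof (Ha n).
  assert (0 <= x ^ n <= 1) by (split; [apply pow_le; lra| apply pow_le1; lra]).
  rewrite Rabs_pos_eq; nra.
Qed.

Lemma cont_left_le (f : R -> R) a d M : continuity_pt f a -> 0 < d ->
  (forall x, a - d < x < a -> f x <= M) -> f a <= M.
Proof.
  intros Hc Hd Hf. destruct (Rle_or_lt (f a) M) as [|Hlt]; auto.
  destruct (Hc (f a - M)) as [al [Hal H]]. lra.
  set (x := a - Rmin al d / 2).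
  assert (0 < Rmin al d) by (apply Rmin_glb_lt; lra).
  assert (Rmin al d <= al) by apply Rmin_l. assert (Rmin al d <= d) by apply Rmin_r.
  specialize (H x). simpl in H. unfold R_dist in H.
  assert (Hx : Rabs (x - a) < al) by (unfold x; rewrite Rabs_left; lra).
  assert (Dx : D_x no_cond a x) by (split; [exact I| unfold x; lra]).
  specialize (H (conj Dx Hx)). specialize (Hf x ltac:(unfold x; lra)).
  apply Rabs_def2 in H. lra.
Qed.

Lemma cont_right_ge (f : R -> R) a d M : continuity_pt f a -> 0 < d ->
  (forall x, a < x < a + d -> M <= f x) -> M <= f a.
Proof.
  intros Hc Hd Hf. destruct (Rle_or_lt M (f a)) as [|Hlt]; auto.
  destruct (Hc (M - f a)) as [al [Hal H]]. lra.
  set (x := a + Rmin al d / 2).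
  assert (0 < Rmin al d) by (apply Rmin_glb_lt; lra).
  assert (Rmin al d <= al) by apply Rmin_l. assert (Rmin al d <= d) by apply Rmin_r.
  specialize (H x). simpl in H. unfold R_dist in H.
  assert (Hx : Rabs (x - a) < al) by (unfold x; rewrite Rabs_right; lra).
  assert (Dx : D_x no_cond a x) by (split; [exact I| unfold x; lra]).
  specialize (H (conj Dx Hx)). specialize (Hf x ltac:(unfold x; lra)).
  apply Rabs_def2 in H. lra.
Qed.

Lemma cont_left_ge (f : R -> R) a d M : continuity_pt f a -> 0 < d ->
  (forall x, a - d < x < a -> M <= f x) -> M <= f a.
Proof.
  intros Hc Hd Hf.
  assert (H := cont_left_le (fun x => - f x) a d (- M)).
  simpl in H. enough (- f a <= - M) by lra. apply H; auto.
  apply continuity_pt_opp; auto. intros x Hx. specialize (Hf x Hx). lra.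
Qed.

Lemma ln_le_sub1 y : 0 < y -> ln y <= y - 1.
Proof. intros Hy. pose proof (exp_ineq1_le (ln y)). rewrite exp_ln in H by lra. lra. Qed.

Lemma cont_of_derive (f : R -> R) x : ex_derive f x -> continuity_pt f x.
Proof.
  intros H. apply continuity_pt_filterlim.
  apply (ex_derive_continuous (K:=R_AbsRing) (V:=R_NormedModule) f). auto.
Qed.

Lemma l2_nonneg n : 0 <= l2 n.
Proof. unfold l2. apply Rlt_le, Rinv_0_lt_compat. pose proof (INR1 n). nra. Qed.
Lemma c3_nonneg n : 0 <= c3 n.
Proof. unfold c3. apply Rlt_le, Rdiv_lt_0_compat. apply b_pos. pose proof (INR1 n). nra. Qed.

Lemma ex_l2 : ex_series l2.
Proof. exists (PI^2/6). exact zeta2. Qed.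

Lemma Series_l2 : Series l2 = PI^2/6.
Proof. apply is_series_unique. exact zeta2. Qed.

Lemma ex_c3 : ex_series c3.
Proof.
  apply (ex_series_le (K:=R_AbsRing) (V:=R_CompleteNormedModule)) with l2.
  2: exact ex_l2.
  intros n. unfold norm; simpl. rewrite Rabs_pos_eq by apply c3_nonneg.
  unfold c3, l2. pose proof (INR1 n). pose proof (b_pos n). pose proof (b_le1 n).
  apply Rmult_le_reg_r with ((INR n + 1)^3). nra.
  unfold Rdiv. rewrite Rmult_assoc, Rinv_l by nra.
  replace (/ (INR n + 1) ^ 2 * (INR n + 1) ^ 3) with (INR n + 1) by (field; lra). nra.
Qed.

Lemma G_cont : continuity_pt (fun x => F (sqrt (1 - x))) 1.
Proof.
  assert (H1 : continuity_pt (fun x => sqrt (1 - x)) 1).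
  { apply (continuity_pt_comp (fun x => 1 - x) sqrt 1).
    apply cont_of_derive. auto_derive. auto.
    replace (1 - 1) with 0 by ring. apply continuity_pt_sqrt. lra. }
  assert (H2 : continuity_pt F (sqrt (1 - 1))).
  { replace (1 - 1) with 0 by ring. rewrite sqrt_0. apply cont_of_derive. unfold F.
    auto_derive. repeat split; try lra. eexists. apply Li2_derive. rewrite Rabs_pos_eq; lra. }
  apply (continuity_pt_comp _ _ 1 H1 H2).
Qed.

Lemma S_eq_F0 : Series c3 = F 0.
Proof.
  assert (Hs := Series_correct _ ex_c3).
  apply Rle_antisym.
  - apply (series_le_bound c3 _ _ Hs). intros N.
    set (h := fun x => F (sqrt (1 - x)) - x ^ (S N) * sum_n c3 N).
    assert (Hh : 0 <= h 1).
    { apply (cont_left_ge h 1 1 0).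
      - unfold h. apply continuity_pt_minus. apply G_cont. apply cont_of_derive. auto_derive. auto.
      - lra.
      - intros x Hx. unfold h. rewrite <- P3_closed by lra.
        pose proof (pow_partial c3 x c3_nonneg ltac:(lra) N).
        pose proof (partial_le_PSeries c3 x N c3_nonneg ex_c3 ltac:(lra)).
        simpl pow. nra. }
    unfold h in Hh. rewrite pow1, Rminus_eq_0, sqrt_0 in Hh. lra.
  - replace (F 0) with ((fun x => F (sqrt (1 - x))) 1) by (simpl; rewrite Rminus_eq_0, sqrt_0; reflexivity).
    apply (cont_left_le (fun x => F (sqrt (1 - x))) 1 1). apply G_cont. lra.
    intros x Hx. rewrite <- P3_closed by lra.
    pose proof (PSeries_le_Series c3 x c3_nonneg ex_c3 ltac:(lra)). nra.
Qed.

Definition Rf w := Li2 w + Li2 (1 - w) + ln w * ln (1 - w).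

Lemma Li2_nonneg w : 0 <= w <= 1 -> 0 <= Li2 w.
Proof.
  intros Hw. unfold Li2. apply Rmult_le_pos. lra.
  apply (PSeries_le_Series l2 w l2_nonneg ex_l2 Hw).
Qed.

Lemma Li2_le w : 0 <= w <= 1 -> Li2 w <= w * (PI^2/6).
Proof.
  intros Hw. unfold Li2. rewrite <- Series_l2.
  pose proof (PSeries_le_Series l2 w l2_nonneg ex_l2 Hw). nra.
Qed.

Lemma Rf_const w : 0 < w < 1 -> Rf w = Rf (1/2).
Proof.
  intros Hw. apply (const_open Rf 0 1); [| auto | lra].
  intros y Hy. unfold Rf.
  assert (DL : forall w, 0 < w < 1 -> Derive (fun x => Li2 x) w = - ln (1 - w) / w).
  { intros z Hz. apply is_derive_unique, Li2_derive'; auto. }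
  auto_derive.
  - repeat split; try lra; eexists; apply Li2_derive; apply Rabs_def1; lra.
  - replace (1 + - y) with (1 - y) by ring.
    rewrite !DL by lra. replace (1 - (1 - y)) with y by ring. field. lra.
Qed.

Lemma reflection : Rf (1/2) = PI^2/6.
Proof.
  apply Rle_antisym.
  -
    set (phi := fun t => PI^2/6 + t * (PI^2/6) + 4 * sqrt t).
    replace (PI^2/6) with (phi 0) by (unfold phi; rewrite sqrt_0; ring).
    apply (cont_right_ge phi 0 (1/2)).
    + unfold phi. apply continuity_pt_plus. apply cont_of_derive. auto_derive. auto.
      apply continuity_pt_scal. apply continuity_pt_sqrt. lra.
    + lra.
    + intros t Ht. rewrite <- (Rf_const (1 - t)) by lra. unfold Rf, phi.
      replace (1 - (1 - t)) with t by ring.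
      pose proof (Li2_le (1 - t) ltac:(lra)). pose proof (Li2_le t ltac:(lra)).
      assert (Hs : 0 < sqrt t) by (apply sqrt_lt_R0; lra).
      assert (Hs2 : sqrt t * sqrt t = t) by (apply sqrt_sqrt; lra).
      assert (HA : 0 <= - ln (1 - t) <= 2 * t).
      { rewrite <- ln_Rinv by lra. split.
        - rewrite <- ln_1. apply ln_le. lra. rewrite <- Rinv_1. apply Rinv_le_contravar; lra.
        - eapply Rle_trans. apply ln_le_sub1. apply Rinv_0_lt_compat; lra.
          apply Rmult_le_reg_r with (1 - t). lra.
          rewrite Rmult_minus_distr_r, Rinv_l by lra. nra. }
      assert (HB : 0 <= - ln t <= 2 / sqrt t).
      { split.
        - assert (ln t <= ln 1) by (apply ln_le; lra). rewrite ln_1 in *. lra.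
        - rewrite <- Hs2 at 1. rewrite ln_mult by lra.
          assert (ln (/ sqrt t) <= / sqrt t - 1) by (apply ln_le_sub1; apply Rinv_0_lt_compat; lra).
          rewrite ln_Rinv in H1 by lra. unfold Rdiv. lra. }
      assert (ln (1 - t) * ln t = (- ln (1 - t)) * (- ln t)) by ring.
      assert ((- ln (1 - t)) * (- ln t) <= 2 * t * (2 / sqrt t)).
      { apply Rmult_le_compat; lra. }
      assert (2 * t * (2 / sqrt t) = 4 * sqrt t) by (rewrite <- Hs2 at 1; field; lra).
      assert (0 <= t * (PI^2/6)) by (pose proof PI_RGT_0; apply Rmult_le_pos; [lra| nra]). lra.
  -
    rewrite <- Series_l2. apply (series_le_bound l2 _ _ (Series_correct _ ex_l2)). intros N.
    set (h := fun w => w ^ (S N) * sum_n l2 N).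
    replace (sum_n l2 N) with (h 1) by (unfold h; rewrite pow1; ring).
    apply (cont_left_le h 1 1).
    + unfold h. apply cont_of_derive. auto_derive. auto.
    + lra.
    + intros w Hw. rewrite <- (Rf_const w) by lra. unfold h, Rf.
      pose proof (pow_partial l2 w l2_nonneg ltac:(lra) N).
      pose proof (partial_le_PSeries l2 w N l2_nonneg ex_l2 ltac:(lra)).
      pose proof (Li2_nonneg (1 - w) ltac:(lra)).
      assert (ln w < 0) by (rewrite <- ln_1; apply ln_increasing; lra).
      assert (ln (1 - w) < 0) by (rewrite <- ln_1; apply ln_increasing; lra).
      assert (0 <= ln w * ln (1 - w)) by nra.
      unfold Li2 in *. simpl pow. assert (w ^ N * sum_n l2 N <= PSeries l2 w) by lra. assert (w * (w ^ N * sum_n l2 N) <= w * PSeries l2 w) by (apply Rmult_le_compat_l; lra). lra.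
Qed.

Theorem mainTheorem3 :
  is_series
    (fun n : nat => Binomial.C (2 * n)%nat n / ((INR n + 1) ^ 3 * 2 ^ (2 * n)%nat))
    (8 - 8 * ln 2 - PI ^ 2 / 3 + 4 * (ln 2) ^ 2).
Proof.
  assert (Hs := Series_correct _ ex_c3).
  rewrite S_eq_F0 in Hs.
  assert (HF : F 0 = 8 - 8 * ln 2 - PI ^ 2 / 3 + 4 * (ln 2) ^ 2).
  { pose proof reflection as R. unfold Rf in R.
    replace (1 - 1/2) with (1/2) in R by field.
    unfold F. replace ((1 - 0) / 2) with (1/2) by field. replace ((1 + 0) / 2) with (1/2) by field.
    rewrite Rplus_0_r, ln_1. rewrite ln_div in * by lra. rewrite ln_1 in *. nra. }
  rewrite HF in Hs.
  apply (is_series_ext c3); [| exact Hs].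
  intros n.
  assert (E : c3 n = Binomial.C (2 * n)%nat n / ((INR n + 1) ^ 3 * 2 ^ (2 * n)%nat)).
  { unfold c3, b.
    assert (0 < 2 ^ (2 * n)) by (apply pow_lt; lra). pose proof (INR1 n).
    field. split; lra. }
  exact E.
Qed.
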